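(* Let $G$ be a graph on $N\ge 21$ vertices with edges $e_1,\dots,e_m$, and for $0\le k\le m$ let $G_k$ be the graph on the same vertex set with edge set $\{e_1,\dots,e_k\}$. Fix $k$ with $0\le k\le m-1$, set $S=\mathcal I(G_k)$, $H=\mathcal I(G_{k+1})$ and $n=2N^2$. Let $A_1,\dots,A_n\in S$ be initial states (with an arbitrary joint distribution), and for each $i\in[n]$ run the BIDC Markov chain on $G_k$ from $A_i$ for $n$ steps, with fresh random choices independent across steps, chains, and of the initial states, producing states $X_{i0}=A_i,X_{i1},\dots,X_{in}$. Let $X$ be the $n\times n$ matrix whose $i$-th row is $(X_{i1},\dots,X_{in})$. Then the probability $p(X)$ that $X$ has no $H$-PM satisfies $p(X)\le e^{-N}$.
   Context: $\mathcal I(F)$ is the family of independent sets (including $\emptyset$) of a graph $F$. The Basic Insert/Delete Chain (BIDC) on a graph $F=(V,E)$ has state space $\mathcal I(F)$; from state $X_t$ it draws a vertex $u\in V$ uniformly at random and sets $X_{t+1}=X_t\setminus\{u\}$ if $u\in X_t$, $X_{t+1}=X_t\cup\{u\}$ if $u\notin X_t$ and $X_t\cup\{u\}\in\mathcal I(F)$, and $X_{t+1}=X_t$ otherwise. A perfect matching (PM) of an $n\times n$ matrix is $M=((i_1,1),\dots,(i_n,n))$ with $\{i_1,\dots,i_n\}=[n]$; an $H$-PM is a PM with $X_{i_j,j}\in H$ for all $j$. *)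

(* Defs.v *)
From mathcomp Require Import all_boot all_order all_algebra all_fingroup.
From mathcomp Require Import all_classical all_reals all_analysis.
Set Implicit Arguments. Unset Strict Implicit. Unset Printing Implicit Defensive.

Definition adj {N : nat} (E : seq ('I_N * 'I_N)) (x y : 'I_N) : bool :=
  ((x, y) \in E) || ((y, x) \in E).

Definition simple_edges {N : nat} (E : seq ('I_N * 'I_N)) : Prop :=
  (forall e, e \in E -> e.1 != e.2) /\ uniq [seq [set e.1; e.2] | e <- E].

Definition indep {N : nat} (E : seq ('I_N * 'I_N)) (X : {set 'I_N}) : bool :=
  [forall x in X, forall y in X, ~~ adj E x y].

Definition bidc_step {N : nat} (E : seq ('I_N * 'I_N)) (X : {set 'I_N}) (u : 'I_N)
  : {set 'I_N} :=
  if u \in X then X :\ u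
  else if indep E (u |: X) then u |: X else X.

Fixpoint bidc_run {N : nat} (E : seq ('I_N * 'I_N)) (X : {set 'I_N}) (s : seq 'I_N)
  : {set 'I_N} :=
  match s with
  | [::] => X
  | u :: s' => bidc_run E (bidc_step E X u) s'
  end.

Definition nn (N : nat) : nat := 2 * N ^ 2.

(* The matrix X: entry (i, j) (0-based j) is the state of chain i after j+1 steps,
   where the vertex chosen by chain i at step l+1 is u (i, l). *)
Definition Xmat {N : nat} (E : seq ('I_N * 'I_N)) (A : {ffun 'I_(nn N) -> {set 'I_N}})
  (u : {ffun 'I_(nn N) * 'I_(nn N) -> 'I_N}) (i j : 'I_(nn N)) : {set 'I_N} :=
  bidc_run E (A i) [seq u (i, l) | l <- take j.+1 (enum 'I_(nn N))].

(* The matrix M has an H-perfect matching, H = independent sets of E: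
   a permutation sigma with column j matched to row sigma j. *)
Definition has_H_PM {n N : nat} (E : seq ('I_N * 'I_N)) (M : 'I_n -> 'I_n -> {set 'I_N})
  : bool :=
  [exists s : {perm 'I_n}, [forall j : 'I_n, indep E (M (s j) j)]].

(* Main.v *)
Require Import Defs.
From mathcomp Require Import all_boot all_order all_algebra all_fingroup.
From mathcomp Require Import zify ring lra.
From mathcomp Require reals exp sequences.
Import reals exp.
Import Order.TTheory GRing.Theory Num.Theory.
Local Notation expR := sequences.expR.

Section Hall.
Variables (R C : finType) (r0 : R).

Definition nbh (adj : C -> {set R}) (Y : {set C}) : {set R} := \bigcup_(y in Y) adj y.

Lemma nbhD (adj : C -> {set R}) (B : {set R}) Y :
  nbh (fun y => adj y :\: B) Y = nbh adj Y :\: B.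
Proof.
apply/setP=> i; rewrite finset.in_setD; apply/bigcupP/andP.
  by case=> y yY; rewrite finset.in_setD => /andP[iB iy]; split=> //; apply/bigcupP; exists y.
by case=> iB /bigcupP[y yY iy]; exists y => //; rewrite finset.in_setD iB.
Qed.

Lemma nbhU (adj : C -> {set R}) Y Z : nbh adj (Y :|: Z) = nbh adj Y :|: nbh adj Z.
Proof. by rewrite /nbh finset.bigcup_setU. Qed.

Lemma nbh_sub (adj : C -> {set R}) y (Y : {set C}) : y \in Y -> adj y \subset nbh adj Y.
Proof. by move=> yY; exact: (finset.bigcup_sup y). Qed.

Lemma hall_gen m : forall (adj : C -> {set R}) (X : {set C}), (#|X| <= m)%N ->
  (forall Y : {set C}, Y \subset X -> (#|Y| <= #|nbh adj Y|)%N) ->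
  exists f : C -> R, {in X &, injective f} /\ {in X, forall x, f x \in adj x}.
Proof.
elim: m => [|m IH] adj X szX hall.
  exists (fun _ => r0); move: szX; rewrite leqn0 cards_eq0 => /eqP ->.
  by split=> x; rewrite inE.
have [szm|] := leqP #|X| m; first exact: IH.
move=> szX'; have eX : #|X| = m.+1 by apply/eqP; rewrite eqn_leq szX.
case: (boolP [exists Y0 : {set C}, [&& Y0 != finset.set0, Y0 \proper X &
                                  (#|nbh adj Y0| <= #|Y0|)%N]]).
- case/existsP=> Y0 /and3P[Y0n0 Y0X tight].
  have sY0X := proper_sub Y0X.
  have [f1 [inj1 in1]] : exists f1 : C -> R,
      {in Y0 &, injective f1} /\ {in Y0, forall x, f1 x \in adj x}.
    apply: IH; first by rewrite -ltnS -eX; exact: proper_card.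
    by move=> Y sY; apply: hall; apply: fintype.subset_trans sY sY0X.
  set N0 := nbh adj Y0.
  have [f2 [inj2 in2]] : exists f2 : C -> R,
      {in X :\: Y0 &, injective f2} /\ {in X :\: Y0, forall x, f2 x \in adj x :\: N0}.
    apply: (IH (fun y => adj y :\: N0)).
      rewrite cardsDS // -ltnS -eX.
      have : (0 < #|Y0|)%N by rewrite card_gt0.
      by case: #|Y0| (subset_leq_card sY0X) => // j; rewrite eX; lia.
    move=> Z sZ; rewrite nbhD.
    have dZ : [disjoint Z & Y0].
      rewrite -setI_eq0; apply/eqP/setP=> x; rewrite !inE.
      apply/negbTE/negP=> /andP[/(subsetP sZ)]; rewrite inE => /andP[/negbTE-> _].
      done.
    have h := hall (Z :|: Y0); rewrite subUset sY0X (fintype.subset_trans sZ) ?subsetDl // in h.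
    have := h erefl; rewrite nbhU cardsU.
    move: dZ; rewrite -setI_eq0 => /eqP -> ; rewrite cards0 subn0.
    rewrite cardsD -/N0.
    have : (#|(nbh adj Z :|: N0)| + #|nbh adj Z :&: N0| = #|nbh adj Z| + #|N0|)%N
      by rewrite cardsUI.
    have := subset_leq_card (subsetIr (nbh adj Z) N0).
    move: tight; rewrite -/N0; lia.
  exists (fun x => if x \in Y0 then f1 x else f2 x); split.
    move=> x y xX yX /=.
    case: ifP => xY; case: ifP => yY.
    + exact: inj1.
    + move=> e; have := in2 y; rewrite !inE yY yX /= => /(_ erefl).
      rewrite -e => /andP[/negP nN _]; case: nN.
      apply: (subsetP (nbh_sub adj _ _ xY)); exact: in1.
    + move=> e; have := in2 x; rewrite !inE xY xX /= => /(_ erefl).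
      rewrite e => /andP[/negP nN _]; case: nN.
      apply: (subsetP (nbh_sub adj _ _ yY)); exact: in1.
    + by apply: inj2; rewrite inE ?xY ?yY.
  move=> x xX /=; case: ifP => xY; first exact: in1.
  by have := in2 x; rewrite !inE xY xX /= => /(_ erefl) /andP[].
- rewrite negb_exists => /forallP notight.
  have : (0 < #|X|)%N by rewrite eX.
  rewrite card_gt0 => /finset.set0Pn[x xX].
  have : (0 < #|adj x|)%N.
    have := hall [set x]; rewrite sub1set xX cards1 => /(_ erefl).
    suff -> : nbh adj [set x] = adj x by [].
    by rewrite /nbh big_set1.
  rewrite card_gt0 => /finset.set0Pn[r rx].
  have [f' [inj' in']] : exists f' : C -> R,
      {in X :\ x &, injective f'} /\ {in X :\ x, forall y, f' y \in adj y :\: [set r]}.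
    apply: (IH (fun y => adj y :\: [set r])).
      by move: (cardsD1 x X); rewrite xX eX /=; case=> ->.
    move=> Z sZ; rewrite nbhD cardsD.
    have := subset_leq_card (subsetIr (nbh adj Z) [set r]); rewrite cards1 => hr.
    case: (eqVneq Z finset.set0) => [->|Zn0]; first by rewrite cards0.
    have := notight Z; rewrite Zn0 /=.
    have -> : Z \proper X.
      rewrite properEneq (fintype.subset_trans sZ) ?subsetDl // andbT.
      apply/eqP=> ZX; have := subsetP sZ x; rewrite ZX xX !inE eqxx /=.
      by move=> /(_ erefl).
    rewrite /= -ltnNge => hlt. lia.
  exists (fun y => if y == x then r else f' y); split.
    move=> y z yX zX /=.
    case: eqP => [->|ynx]; case: eqP => [->|znx] //.
    + move=> e; have := in' z; rewrite !inE zX andbT => /(_ (introT negP (fun h => znx (eqP h)))).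
      by rewrite -e eqxx.
    + move=> e; have := in' y; rewrite !inE yX andbT => /(_ (introT negP (fun h => ynx (eqP h)))).
      by rewrite e eqxx.
    + by apply: inj'; rewrite !inE ?yX ?zX andbT; apply/eqP.
  move=> y yX /=; case: eqP => [->|ynx] //.
  have := in' y; rewrite !inE yX andbT => /(_ (introT negP (fun h => ynx (eqP h)))).
  by case/andP.
Qed.
End Hall.
Arguments nbh {R C}. Arguments nbh_sub {R C}.

Lemma konig n (good : 'I_n -> 'I_n -> bool) : (0 < n)%N ->
  ~~ [exists s : {perm 'I_n}, [forall j, good (s j) j]] ->
  exists S T : {set 'I_n}, (n < #|S| + #|T|)%N /\
     forall i j, i \in S -> j \in T -> ~~ good i j.
Proof.
move=> n0 noPM; pose adj := fun j : 'I_n => [set i | good i j].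
case: (boolP [forall Y : {set 'I_n}, #|Y| <= #|nbh adj Y|]) => [/forallP hall|].
  have := @hall_gen _ _ (Ordinal n0) n adj setT.
  rewrite cardsT card_ord => /(_ (leqnn n) (fun Y _ => hall Y)) [f [finj fin]].
  have injf : injective f by apply: in2T => x y _ _; apply: finj; rewrite inE.
  case/negP: noPM; apply/existsP; exists (perm injf); apply/forallP=> j.
  by rewrite permE; have := fin j; rewrite !inE => /(_ erefl).
rewrite negb_forall => /existsP[Y]; rewrite -ltnNge => hlt.
exists (~: nbh adj Y), Y; split.
  have := cardsC (nbh adj Y); rewrite card_ord; move: hlt; set A := nbh adj Y; move=> h1 h2; rewrite -[X in (X < _)%N]h2 addnC ltn_add2l; exact: h1.
move=> i j; rewrite inE => iN jY; apply/negP => gij; case/negP: iN.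
by apply: (subsetP (nbh_sub adj _ _ jY)); rewrite inE.
Qed.

Section Step.
Variable N : nat.
Implicit Types (E : seq ('I_N * 'I_N)) (X Y : {set 'I_N}).

Lemma indep_sub E X Y : Y \subset X -> indep E X -> indep E Y.
Proof.
move=> sYX /forall_inP h; apply/forall_inP=> x xY; apply/forall_inP=> y yY.
by have /forall_inP := h x (subsetP sYX _ xY); apply; apply: (subsetP sYX).
Qed.

Lemma step_indep {E X} c : indep E X -> indep E (bidc_step E X c).
Proof.
rewrite /bidc_step => iX; case: ifP => _; first by apply: indep_sub iX; apply: subD1set.
by case: ifP.
Qed.

Lemma run_indep E X s : indep E X -> indep E (bidc_run E X s).
Proof. by elim: s X => [|c s IH] X //= iX; apply: IH; apply: step_indep. Qed.

Lemma step_sub E X c : bidc_step E X c \subset c |: X.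
Proof.
rewrite /bidc_step; case: ifP => _.
  by apply: fintype.subset_trans (subD1set _ _) (subsetUr _ _).
by case: ifP => _ //; apply: subsetUr.
Qed.

Lemma step_in {E X c} : c \in X -> c \notin bidc_step E X c.
Proof. by rewrite /bidc_step => ->; rewrite !inE eqxx. Qed.

Lemma bad_ab {E e Y} : indep E Y -> ~~ indep (rcons E e) Y -> (e.1 \in Y) && (e.2 \in Y).
Proof.
move=> /forall_inP iY; rewrite /indep negb_forall_in => /existsP[x /andP[xY]].
rewrite negb_forall_in => /existsP[y /andP[yY]]; rewrite negbK /adj !mem_rcons !in_cons.
have /forall_inP := iY x xY => /(_ y yY); rewrite /adj negb_or => /andP[/negbTE-> /negbTE->].
rewrite !orbF; case/orP=> /eqP <- /=; by rewrite ?xY ?yY.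
Qed.

Lemma sum_bool (P : pred 'I_N) : (\sum_c (P c : nat))%N = #|P|.
Proof.
Proof.
rewrite -sum1_card [RHS]big_mkcond /=; apply: eq_bigr => c _; by case: ifP => /=; rewrite unfold_in => ->.
Qed.

Lemma count_bad E e X : (3 <= N)%N -> e.1 != e.2 -> indep E X ->
  (\sum_(c : 'I_N) ~~ indep (rcons E e) (bidc_step E X c) <= N - 2)%N.
Proof.
move=> N3 ab iX.
set a := e.1; set b := e.2.
have [z zab] : exists z, z \notin [set a; b].
  have : (0 < #|~: [set a; b]|)%N.
    have := cardsC [set a; b]; rewrite card_ord cards2; lia.
  by rewrite card_gt0 => /set0Pn[z]; rewrite inE => ?; exists z.
move: zab; rewrite !inE negb_or => /andP[za zb].
pose good c := ~~ ((a \in bidc_step E X c) && (b \in bidc_step E X c)).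
have gen : forall c1 c2, c1 != c2 -> good c1 -> good c2 ->
   (\sum_(c : 'I_N) ~~ indep (rcons E e) (bidc_step E X c) <= N - 2)%N.
  move=> c1 c2 c12 g1 g2.
  have -> : (N - 2 = #|~: [set c1; c2]|)%N.
    have := cardsC [set c1; c2]; rewrite card_ord cards2 c12; lia.
  rewrite -sum_bool; apply: leq_sum => c _.
  case: (boolP (indep _ _)) => //= ic.
  have := bad_ab (step_indep c iX) ic; rewrite -/a -/b => hab.
  change (0 < (c \in ~: [set c1; c2]))%N; rewrite !inE; case: eqP => [ec|]; first by move: g1; rewrite /good -ec hab.
  case: eqP => [ec|] //; by move: g2; rewrite /good -ec hab.
have notin_sub : forall c v, v != c -> v \notin X -> v \notin bidc_step E X c.
  move=> c v vc vX; apply/negP=> /(subsetP (step_sub E X c)); rewrite !inE.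
  by rewrite (negbTE vc) (negbTE vX).
case: (boolP (a \in X)) => aX; case: (boolP (b \in X)) => bX.
- apply: (gen a b ab); rewrite /good.
    by rewrite (negbTE (step_in aX)).
  by rewrite (negbTE (step_in bX)) andbF.
- apply: (gen a z); first by rewrite eq_sym.
    by rewrite /good (negbTE (step_in aX)).
  by rewrite /good (negbTE (notin_sub z b _ bX)) ?andbF // eq_sym.
- apply: (gen b z); first by rewrite eq_sym.
    by rewrite /good (negbTE (step_in bX)) andbF.
  by rewrite /good (negbTE (notin_sub z a _ aX)) // eq_sym.
- apply: (gen a b ab).
    by rewrite /good (negbTE (notin_sub a b _ bX)) ?andbF // eq_sym.
  by rewrite /good (negbTE (notin_sub b a _ aX)).
Qed.
End Step.
Arguments step_indep {N E X}. Arguments step_in {N E X c}. Arguments bad_ab {N E e Y}.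

Lemma tuple_sum_cons (V : finType) m (F : seq V -> nat) :
  (\sum_(t : m.+1.-tuple V) F t = \sum_(c : V) \sum_(t : m.-tuple V) F (c :: t))%N.
Proof.
rewrite pair_big /=.
rewrite (reindex (fun p : V * m.-tuple V => cons_tuple p.1 p.2)) /=.
  by apply: eq_bigl.
exists (fun t => (thead t, behead_tuple t)) => [[c t]|t] _ /=.
  by congr pair; apply: val_inj.
by apply: val_inj; case: t => [[|x s] Hs].
Qed.

Section Row.
Variable N : nat.
Lemma row_bound (E : seq ('I_N * 'I_N)) e m : (3 <= N)%N -> e.1 != e.2 ->
  forall X (P : nat -> bool), indep E X ->
 (\sum_(t : m.-tuple 'I_N) \prod_(j < m) (if P j then (~~ indep (rcons E e) (bidc_run E X (take j.+1 t)) : nat) else 1)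
   <= \prod_(j < m) (if P j then N - 2 else N))%N.
Proof.
move=> N3 ab; elim: m => [|m IH] X P iX.
  rewrite big_ord0 (eq_bigr (fun _ => 1%N)); last by move=> t _; rewrite big_ord0.
  by rewrite sum1_card card_tuple.
rewrite (@tuple_sum_cons _ _ (fun s => \prod_(j < m.+1) (if P j then (~~ indep (rcons E e) (bidc_run E X (take j.+1 s)) : nat) else 1))) big_ord_recl /=.
have step : forall c, (\sum_(t : m.-tuple 'I_N)
   \prod_(j < m.+1) (if P j then (~~ indep (rcons E e) (bidc_run E X (take j.+1 (c :: t)))
 : nat) else 1) <= (if P 0 then (~~ indep (rcons E e) (bidc_step E X c) : nat) else 1) *
    \prod_(i < m) (if P (bump 0 i) then N - 2 else N))%N.
  move=> c.
  under eq_bigr => t _ do rewrite big_ord_recl /= take0 /=.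
  rewrite -big_distrr /=; apply: leq_mul => //.
  exact: (IH (bidc_step E X c) (fun j => P j.+1) (step_indep c iX)).
apply: leq_trans; first by apply: leq_sum => c _; exact: step.
rewrite -big_distrl /=; apply: leq_mul => //.
case: (P 0).
  exact: count_bad.
by rewrite sum1_card card_ord.
Qed.
End Row.

Section Count.
Variables (N : nat) (Ek : seq ('I_N * 'I_N)) (e : 'I_N * 'I_N).
Local Notation n := (nn N).

Lemma sum_curry (V : finType) (F : {ffun 'I_n * 'I_n -> V} -> nat) :
  (\sum_(u : {ffun 'I_n * 'I_n -> V}) F u =
   \sum_(g : {ffun 'I_n -> {ffun 'I_n -> V}}) F [ffun p => g p.1 p.2])%N.
Proof.
rewrite (reindex (fun g : {ffun 'I_n -> {ffun 'I_n -> V}} => [ffun p => g p.1 p.2])) //.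
apply: onW_bij.
exists (fun u : {ffun 'I_n * 'I_n -> V} => [ffun i => [ffun j => u (i, j)]]).
  by move=> g; apply/ffunP=> i; apply/ffunP=> j; rewrite !ffunE.
by move=> u; apply/ffunP=> [[i j]]; rewrite !ffunE.
Qed.

Lemma sum_tuple (V : finType) (F : seq V -> nat) :
  (\sum_(w : {ffun 'I_n -> V}) F [seq w l | l <- enum 'I_n] =
   \sum_(t : n.-tuple V) F t)%N.
Proof.
rewrite (reindex (fun t : n.-tuple V => [ffun l => tnth t l])) //=.
  apply: eq_bigr => t _; congr F.
  by rewrite -[RHS](map_tnth_enum t); apply: eq_map => l; rewrite ffunE.
apply: onW_bij.
exists (fun w : {ffun 'I_n -> V} => [tuple w l | l < n]).
  by move=> t; apply: eq_from_tnth => l; rewrite tnth_mktuple ffunE.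
by move=> w; apply/ffunP=> l; rewrite ffunE tnth_mktuple.
Qed.

Lemma count_rect (A : {ffun 'I_n -> {set 'I_N}}) (S T : {set 'I_n}) :
  (3 <= N)%N -> e.1 != e.2 -> (forall i, indep Ek (A i)) ->
  (\sum_(u : {ffun 'I_n * 'I_n -> 'I_N}) \prod_(i : 'I_n) \prod_(j : 'I_n)
     (if (i \in S) && (j \in T) then (~~ indep (rcons Ek e) (Xmat Ek A u i j) : nat) else 1)
  <= \prod_(i : 'I_n) \prod_(j : 'I_n) (if (i \in S) && (j \in T) then N - 2 else N))%N.
Proof.
move=> N3 ab iA.
rewrite sum_curry.
pose G (i : 'I_n) (w : {ffun 'I_n -> 'I_N}) := \prod_(j : 'I_n)
  (if (i \in S) && (j \in T) then
     (~~ indep (rcons Ek e) (bidc_run Ek (A i) (take j.+1 [seq w l | l <- enum 'I_n])) : nat)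
   else 1).
rewrite (eq_bigr (fun g : {ffun 'I_n -> {ffun 'I_n -> 'I_N}} => \prod_(i : 'I_n) G i (g i))); last first.
  move=> g _; apply: eq_bigr => i _; apply: eq_bigr => j _.
  by rewrite /Xmat -map_take; congr (if _ then (~~ indep _ (bidc_run _ _ _) : nat) else _);
     apply: eq_map => l; rewrite ffunE.
rewrite -(bigA_distr_bigA G).
apply: leq_prod => i _.
rewrite /G (@sum_tuple 'I_N (fun s => \prod_(j : 'I_n)
  (if (i \in S) && (j \in T) then
     (~~ indep (rcons Ek e) (bidc_run Ek (A i) (take j.+1 s)) : nat) else 1))).
pose P := fun j : nat => (i \in S) && (j \in [seq val x | x <- enum T]).
have PE : forall j : 'I_n, P j = (i \in S) && (j \in T).
  by move=> j; rewrite /P (mem_map val_inj) mem_enum.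
have := @row_bound N Ek e n N3 ab (A i) P (iA i).
under eq_bigr => t _ do under eq_bigr => j _ do rewrite PE.
under [X in (_ <= X)%N -> _]eq_bigr => j _ do rewrite PE. by apply.
Qed.
End Count.

Local Open Scope ring_scope.

Lemma sum_set_pow (R : comPzRingType) n (x : R) :
  \sum_(S : {set 'I_n}) x ^+ #|S| = (1 + x) ^+ n.
Proof.
have -> : (1 + x) ^+ n = \prod_(i < n) \sum_(b : bool) (if b then x else 1).
  by rewrite prodr_const card_ord big_bool /= addrC.
rewrite bigA_distr_bigA /=.
rewrite (reindex (fun f : {ffun 'I_n -> bool} => [set i | f i])) /=; last first.
  apply: onW_bij; exists (fun S : {set 'I_n} => [ffun i => i \in S]).
    by move=> f; apply/ffunP=> i; rewrite ffunE inE.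
  by move=> S; apply/setP=> i; rewrite inE ffunE.
apply: eq_bigr => f _.
rewrite -prodr_const big_mkcond /=; apply: eq_bigr => i _.
by rewrite inE.
Qed.

Lemma nat_pow_bound m : (19 <= m)%N -> (4 * (m + 2) ^ 2 <= 2 ^ m)%N.
Proof.
elim: m => [//|m IH]; rewrite leq_eqVlt => /orP[/eqP<- //|].
rewrite ltnS => hm; have h := IH hm; rewrite [(2 ^ m.+1)%N]expnS.
have := leq_mul (leqnn 2) h; move: (2 ^ m)%N => p; nia.
Qed.

Section Real.
Variable R : realType.

Lemma pair_sum_bound (n : nat) (x : R) : (0 < n)%N -> 0 <= x ->
  \sum_(p : {set 'I_n} * {set 'I_n} | (n < #|p.1| + #|p.2|)%N) x ^+ #|p.1|
   <= ((1 + n%:R) ^+ n / n%:R ^+ n.+1) * ((1 + x * n%:R) ^+ n - 1).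
Proof.
move=> n0 x0; set c := _ / _.
have c0 : 0 <= c by rewrite divr_ge0 // exprn_ge0 // ?addr_ge0 ?ler0n.
have nR0 : 0 < n%:R :> R by rewrite ltr0n.
rewrite big_mkcond /= -(pair_bigA _ (fun (S T : {set 'I_n}) => if (n < #|S| + #|T|)%N then x ^+ #|S| else 0)) /=.
have -> : (1 + x * n%:R) ^+ n - 1 =
   \sum_(S : {set 'I_n}) ((x * n%:R) ^+ #|S| - (S == set0)%:R).
  rewrite sumrB sum_set_pow; congr (_ - _).
  rewrite (bigD1 set0) //= eqxx big1 ?addr0 // => S /negbTE -> //.
rewrite mulr_sumr; apply: ler_sum => S _.
case: (eqVneq S set0) => [->|Sn0].
  rewrite cards0 expr0 subrr mulr0 big1 // => T _; rewrite add0n.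
  case: ifP => // hlt; by move: (max_card T); rewrite card_ord leqNgt hlt.
rewrite (_ : false%:R = 0 :> R) // subr0.
apply: (@le_trans _ _ (\sum_(T : {set 'I_n}) x ^+ #|S| * (n%:R ^+ (#|S| + #|T|) / n%:R ^+ n.+1))).
  apply: ler_sum => T _; case: ifP => h.
    rewrite -[X in X <= _]mulr1 ler_wpM2l ?exprn_ge0 //.
    rewrite ler_pdivlMr ?exprn_gt0 // mul1r.
    by apply: ler_weXn2l; rewrite ?ler1n.
  by rewrite mulr_ge0 ?exprn_ge0 ?divr_ge0 ?exprn_ge0 ?ler0n.
rewrite -mulr_sumr.
under eq_bigr => T _ do rewrite exprD mulrAC.
rewrite -mulr_sumr sum_set_pow.
have -> : c * (x * n%:R) ^+ #|S| = x ^+ #|S| * (n%:R ^+ #|S| / n%:R ^+ n.+1 * (1 + n%:R) ^+ n).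
  by rewrite /c exprMn addrC; field; rewrite expf_neq0 // gt_eqF.
by [].
Qed.

Lemma E1_ge2 : 2 <= expR 1 :> R.
Proof. by have := expR_ge1Dx (1 : R); rewrite (_ : 1 + 1 = 2 :> R) //. Qed.

Lemma key_num (N : nat) : (21 <= N)%N -> 4 * expR 1 ^+ 2 * N%:R ^+ 2 <= expR 1 ^+ N :> R.
Proof.
move=> N21; have [m -> hm] : exists2 m, N = (m + 2)%N & (19 <= m)%N.
  by exists (N - 2)%N; lia.
have h := nat_pow_bound m hm.
rewrite exprD.
have h2 : 4 * (m + 2)%:R ^+ 2 <= expR 1 ^+ m :> R.
  apply: (@le_trans _ _ (2 ^ m)%N%:R).
    by rewrite -(ler_nat R) natrM natrX in h.
  rewrite natrX; apply: lerXn2r; rewrite ?nnegrE ?ler0n ?E1_ge2 ?expR_ge0 //.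
have e2 : 0 <= expR 1 ^+ 2 :> R by rewrite exprn_ge0 // expR_ge0.
nra.
Qed.

Lemma c_bound (n : nat) : (0 < n)%N ->
  (1 + n%:R) ^+ n / n%:R ^+ n.+1 <= expR 1 / n%:R :> R.
Proof.
move=> n0; have nR0 : 0 < n%:R :> R by rewrite ltr0n.
have -> : (1 + n%:R) ^+ n / n%:R ^+ n.+1 = (1 + n%:R^-1) ^+ n / n%:R :> R.
  rewrite (_ : 1 + n%:R^-1 = (1 + n%:R) / n%:R); last by field; rewrite gt_eqF.
  by rewrite expr_div_n exprSr invfM mulrA.
rewrite ler_pM2r ?invr_gt0 //.
apply: le_trans (_ : expR (n%:R^-1) ^+ n <= _).
  by apply: lerXn2r; rewrite ?nnegrE ?addr_ge0 ?invr_ge0 ?ler0n ?expR_ge0 ?expR_ge1Dx //.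
by rewrite -expRM_natl mulfV ?gt_eqF.
Qed.

Lemma final_bound (N : nat) : (21 <= N)%N ->
  \sum_(p : {set 'I_(2 * N ^ 2)} * {set 'I_(2 * N ^ 2)} | (2 * N ^ 2 < #|p.1| + #|p.2|)%N)
     ((N - 2)%:R / N%:R) ^+ (#|p.1| * #|p.2|) <= expR (- N%:R) :> R.
Proof.
move=> N21; set n := (2 * N ^ 2)%N; set q := (N - 2)%:R / N%:R : R.
have NR0 : 0 < N%:R :> R by rewrite ltr0n; lia.
have nR0 : 0 < n%:R :> R by rewrite ltr0n /n; lia.
have qE : q = 1 - 2 / N%:R by rewrite /q natrB; [field; rewrite gt_eqF | lia].
have q0 : 0 <= q by rewrite /q divr_ge0 ?ler0n.
have q1 : q <= 1 by rewrite qE lerBlDr lerDl divr_ge0 ?ler0n.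
set r := q ^+ (N ^ 2).
have r0 : 0 <= r by rewrite exprn_ge0.
apply: (@le_trans _ _ (\sum_(p : {set 'I_n} * {set 'I_n} | (n < #|p.1| + #|p.2|)%N)
    (r ^+ #|p.1| + r ^+ #|p.2|))).
  apply: ler_sum => -[S T] /= hST.
  have rq : forall a b : nat, (n < a + b)%N -> (a <= b)%N -> q ^+ (a * b) <= r ^+ a.
    move=> a b hab ab; rewrite /r -exprM; apply: ler_wiXn2l => //.
    rewrite mulnC leq_mul2l; apply/orP; right; rewrite /n in hab; lia.
  case: (leqP #|S| #|T|) => hs.
    by apply: le_trans (rq _ _ hST hs) _; rewrite lerDl exprn_ge0.
  rewrite mulnC; apply: le_trans (rq _ _ _ (ltnW hs)) _; first by rewrite addnC.
  by rewrite lerDr exprn_ge0.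
rewrite big_split /=.
have -> : \sum_(p : {set 'I_n} * {set 'I_n} | (n < #|p.1| + #|p.2|)%N) r ^+ #|p.2| =
          \sum_(p : {set 'I_n} * {set 'I_n} | (n < #|p.1| + #|p.2|)%N) r ^+ #|p.1|.
  rewrite (reindex (fun p : {set 'I_n} * {set 'I_n} => (p.2, p.1))) /=; last first.
    by apply: onW_bij; exists (fun p : {set 'I_n} * {set 'I_n} => (p.2, p.1)) => -[].
  by apply: eq_bigl => p; rewrite addnC.
have n0 : (0 < n)%N by rewrite /n; lia.
apply: (le_trans (lerD (@pair_sum_bound n r n0 r0) (@pair_sum_bound n r n0 r0))).
set c := _ / _.
set P := (1 + r * n%:R) ^+ n.
set d := n%:R * (r * n%:R).
set D := expR d.
set E1 := expR 1 : R.
set y := expR N%:R : R.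
have E12 : 2 <= E1 := E1_ge2.
have E10 : 0 < E1 by apply: lt_le_trans E12.
have y0 : 0 < y by rewrite expR_gt0.
have yE : y = E1 ^+ N by rewrite /y /E1 -expRM_natl mulr1.
have hkey : 4 * E1 ^+ 2 * N%:R ^+ 2 <= y by rewrite yE; apply: key_num.
have hc : c <= E1 / n%:R by apply: c_bound.
have c0 : 0 <= c by rewrite divr_ge0 ?exprn_ge0 ?addr_ge0 ?ler0n.
have hP : P <= D.
  rewrite /D /d expRM_natl; apply: lerXn2r; rewrite ?nnegrE ?addr_ge0 ?mulr_ge0 ?ler0n ?expR_ge0 //.
  exact: expR_ge1Dx.
have d0 : 0 <= d by rewrite /d !mulr_ge0 ?ler0n.
have hD : D - 1 <= d * D.
  have := expR_ge1Dx (- d); rewrite expRN -/D => h.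
  have D0 : 0 < D by rewrite expR_gt0.
  have : (1 - d) * D <= 1 by rewrite -(ler_pdivlMr _ _ D0) mul1r.
  lra.
have hr : r <= (y * y)^-1.
  rewrite /r; apply: le_trans (_ : expR (- (2 / N%:R)) ^+ (N ^ 2) <= _).
    apply: lerXn2r; rewrite ?nnegrE ?q0 ?expR_ge0 //; rewrite qE; exact: expR_ge1Dx.
  have -> : (y * y)^-1 = expR (- (N%:R + N%:R)) by rewrite expRN expRD.
  rewrite -expRM_natl natrX (_ : (N%:R ^+ 2) * - (2 / N%:R) = - (N%:R + N%:R)) //.
  by field; rewrite gt_eqF.
have nE : n%:R = 2 * N%:R ^+ 2 :> R by rewrite /n natrM natrX.
have yy0 : 0 < y * y by rewrite mulr_gt0.
have hN4 : 4 * N%:R ^+ 4 <= y * y.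
  have h16 : 4 * N%:R ^+ 2 <= y.
    apply: le_trans hkey; rewrite ler_pM2r ?exprn_gt0 //.
    have : 4 <= E1 ^+ 2 by rewrite expr2; nra.
    lra.
  have N2 : 0 <= N%:R ^+ 2 :> R by rewrite exprn_ge0 // ler0n.
  rewrite (_ : N%:R ^+ 4 = N%:R ^+ 2 * N%:R ^+ 2 :> R); last by rewrite -exprD.
  nra.
have hd1 : d <= 1.
  apply: (@le_trans _ _ (n%:R * n%:R * (y * y)^-1)).
    have nn0 : 0 <= n%:R * n%:R :> R by rewrite mulr_ge0 ?ler0n.
    rewrite /d; nra.
  rewrite nE ler_pdivrMr // mul1r; apply: le_trans hN4.
  rewrite (_ : 2 * N%:R ^+ 2 * (2 * N%:R ^+ 2) = 4 * N%:R ^+ 4 :> R) //.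
  by ring.
have hDE : D <= E1 by rewrite /D /E1 ler_expR.
have s1 : c * (P - 1) <= c * (d * E1).
  rewrite ler_wpM2l //.
  have : d * D <= d * E1 by rewrite ler_wpM2l.
  lra.
have s2 : c * (d * E1) <= E1 / n%:R * (d * E1) by rewrite ler_wpM2r ?mulr_ge0 // ltW.
have s3 : E1 / n%:R * (d * E1) = E1 ^+ 2 * n%:R * r by rewrite /d; field; rewrite gt_eqF.
have s4 : E1 ^+ 2 * n%:R * r <= E1 ^+ 2 * n%:R * (y * y)^-1
  by rewrite ler_wpM2l ?mulr_ge0 ?exprn_ge0 ?ler0n // ltW.
have s5 : 2 * (E1 ^+ 2 * n%:R * (y * y)^-1) <= y^-1.
  rewrite nE (_ : 2 * (E1 ^+ 2 * (2 * N%:R ^+ 2) * (y * y)^-1) =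
     4 * E1 ^+ 2 * N%:R ^+ 2 * (y * y)^-1); last by ring.
  apply: le_trans (_ : y * (y * y)^-1 <= _).
    by rewrite ler_wpM2r // invr_ge0 ltW.
  by rewrite invfM mulrA mulfV ?gt_eqF // mul1r.
rewrite expRN -/y.
have : c * (P - 1) <= E1 ^+ 2 * n%:R * (y * y)^-1.
  move: s4; rewrite -s3; lra.
lra.
Qed.
End Real.

Lemma card_set_sum (T : finType) (P : pred T) : #|[set u | P u]| = (\sum_u (P u : nat))%N.
Proof.
rewrite -sum1_card [LHS]big_mkcond /=; apply: eq_bigr => u _; rewrite inE.
by case: (P u).
Qed.

Lemma prod_cast (R : realType) (N n : nat) (S T : {set 'I_n}) : (0 < N)%N ->
  ((\prod_(i : 'I_n) \prod_(j : 'I_n) (if (i \in S) && (j \in T) then N - 2 else N))%N)%:R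
  = (N ^ (n * n))%N%:R * ((N - 2)%:R / N%:R) ^+ (#|S| * #|T|) :> R.
Proof.
move=> N0; have NR0 : N%:R != 0 :> R by rewrite pnatr_eq0 -lt0n.
set q := (N - 2)%:R / N%:R : R.
rewrite natr_prod.
under eq_bigr => i _ do rewrite natr_prod.
have fE : forall c : bool, ((if c then N - 2 else N)%N)%:R = N%:R * (if c then q else 1) :> R.
  by case; rewrite ?mulr1 // /q mulrC mulfVK.
under eq_bigr => i _ do under eq_bigr => j _ do rewrite fE.
under eq_bigr => i _ do rewrite big_split /=.
rewrite big_split /= !prodr_const !card_ord natrX exprM; congr (_ * _).
rewrite mulnC exprM -prodr_const [RHS]big_mkcond /=; apply: eq_bigr => i _.
case: (i \in S) => /=; last by rewrite big1.
by rewrite -prodr_const [RHS]big_mkcond.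
Qed.

Lemma perA (R : realType) N (Ek : seq ('I_N * 'I_N)) (e : 'I_N * 'I_N)
  (A : {ffun 'I_(nn N) -> {set 'I_N}}) :
  (21 <= N)%N -> e.1 != e.2 -> (forall i, indep Ek (A i)) ->
  #|[set u : {ffun 'I_(nn N) * 'I_(nn N) -> 'I_N} | ~~ has_H_PM (rcons Ek e) (Xmat Ek A u)]|%:R
   / #|{ffun 'I_(nn N) * 'I_(nn N) -> 'I_N}|%:R <= expR (- N%:R) :> R.
Proof.
move=> N21 ab iA.
set n := nn N.
have n0 : (0 < n)%N by rewrite /n /nn; lia.
have N3 : (3 <= N)%N by lia.
pose F (p : {set 'I_n} * {set 'I_n}) (u : {ffun 'I_n * 'I_n -> 'I_N}) :=
  \prod_(i : 'I_n) \prod_(j : 'I_n) (if (i \in p.1) && (j \in p.2) then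
     (~~ indep (rcons Ek e) (Xmat Ek A u i j) : nat) else 1).
have h1 : (#|[set u | ~~ has_H_PM (rcons Ek e) (Xmat Ek A u)]| <=
   \sum_(p : {set 'I_n} * {set 'I_n} | (n < #|p.1| + #|p.2|)%N) \sum_u F p u)%N.
  rewrite card_set_sum [X in (_ <= X)%N]exchange_big /=; apply: leq_sum => u _.
  case: (boolP (has_H_PM _ _)) => //= noPM.
  have [S [T [hST hbad]]] :=
    @konig n (fun i j => indep (rcons Ek e) (Xmat Ek A u i j)) n0 noPM.
  rewrite (bigD1 (S, T)) //= (_ : F (S, T) u = 1%N) //.
  apply: big1 => i _; apply: big1 => j _ /=.
  by case: ifP => // /andP[iS jT]; rewrite (hbad i j iS jT).
have h2 : (\sum_(p : {set 'I_n} * {set 'I_n} | (n < #|p.1| + #|p.2|)%N) \sum_u F p u <=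
   \sum_(p : {set 'I_n} * {set 'I_n} | (n < #|p.1| + #|p.2|)%N)
    \prod_(i : 'I_n) \prod_(j : 'I_n) (if (i \in p.1) && (j \in p.2) then N - 2 else N))%N.
  by apply: leq_sum => p _; apply: count_rect.
have hD : #|{ffun 'I_n * 'I_n -> 'I_N}| = (N ^ (n * n))%N.
  by rewrite card_ffun card_prod !card_ord.
have DR0 : 0 < (N ^ (n * n))%N%:R :> R by rewrite ltr0n expn_gt0; apply/orP; left; lia.
rewrite hD ler_pdivrMr //.
apply: le_trans (_ : (\sum_(p : {set 'I_n} * {set 'I_n} | (n < #|p.1| + #|p.2|)%N)
    \prod_(i : 'I_n) \prod_(j : 'I_n) (if (i \in p.1) && (j \in p.2) then N - 2 else N))%N%:R <= _).
  by rewrite ler_nat; apply: leq_trans h1 h2.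
rewrite natr_sum.
have N0 : (0 < N)%N by lia.
under eq_bigr => p _ do rewrite (@prod_cast R N n _ _ N0).
rewrite -mulr_sumr mulrC ler_pM2r //.
exact: final_bound.
Qed.

Theorem theorem4 (R : realType) (N : nat) (E : seq ('I_N * 'I_N)) (k : nat)
  (mu : {ffun {ffun 'I_(nn N) -> {set 'I_N}} -> R}) :
  (21 <= N)%N ->
  simple_edges E ->
  (k < size E)%N ->
  (forall A, 0 <= mu A) ->
  \sum_A mu A = 1 ->
  (forall A, mu A != 0 -> forall i, indep (take k E) (A i)) ->
  \sum_A mu A *
    (#|[set u : {ffun 'I_(nn N) * 'I_(nn N) -> 'I_N} |
         ~~ has_H_PM (take k.+1 E) (Xmat (take k E) A u)]|%:R
     / #|{ffun 'I_(nn N) * 'I_(nn N) -> 'I_N}|%:R)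
  <= expR (- N%:R).
Proof.
move=> N21 [noloop _] kE mu0 mu1 iA.
have N0 : (0 < N)%N by lia.
pose e0 : 'I_N * 'I_N := (Ordinal N0, Ordinal N0).
have ab : (nth e0 E k).1 != (nth e0 E k).2 by apply: noloop; apply: mem_nth.
rewrite (take_nth e0 kE).
have -> : expR (- N%:R) = \sum_A mu A * expR (- N%:R) :> R by rewrite -mulr_suml mu1 mul1r.
apply: ler_sum => A _.
case: (eqVneq (mu A) 0) => [->|muA]; first by rewrite !mul0r.
by rewrite ler_wpM2l //; apply: perA => //; apply: iA.
Qed.
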